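(* Let $g\colon\mathbb{R}^d\to[0,\infty)$ be a bounded non-negative function with $\|g\|_\infty\ge1$, and suppose $g\le\ell_u$ pointwise for some $u\in\mathbb{R}^d$ with $0<|u|<1$. Then \[ g^\circ(u)\ge \frac{g^\circ(0)}{e}. \]
   Context: The height function is $\hbar(x)=\sqrt{1-|x|^2}$ for $|x|\le1$ and $\hbar(x)=0$ otherwise. For $|u|<1$, $\ell_u(x)=\hbar(u)\exp\!\big(-\frac{1}{\hbar^2(u)}\langle u,x-u\rangle\big)$. The polar function of a non-negative function $g$ is $g^\circ(p)=\inf_{\{x: g(x)>0\}}\frac{e^{-\langle p,x\rangle}}{g(x)}$. $\|\cdot\|_\infty$ is the supremum norm. *)

(* Defs.v *)
From HB Require Import structures.
From mathcomp Require Import all_boot all_order all_algebra.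
From mathcomp Require Import all_classical all_reals all_analysis.
Set Implicit Arguments. Unset Strict Implicit. Unset Printing Implicit Defensive.
Import Order.TTheory GRing.Theory Num.Theory.
Local Open Scope ring_scope.
Local Open Scope classical_set_scope.

Section Defs.
Variables (R : realType) (d : nat).

Definition dotp (x y : 'rV[R]_d) : R := \sum_(i < d) x ord0 i * y ord0 i.
Definition enorm (x : 'rV[R]_d) : R := Num.sqrt (dotp x x).

Definition hbar (x : 'rV[R]_d) : R :=
  if enorm x <= 1 then Num.sqrt (1 - enorm x ^+ 2) else 0.

Definition ell (u x : 'rV[R]_d) : R :=
  hbar u * expR (- ((hbar u ^+ 2)^-1 * dotp u (x - u))).

Definition polar (g : 'rV[R]_d -> R) (p : 'rV[R]_d) : R :=
  inf [set r | exists x, 0 < g x /\ r = expR (- dotp p x) / g x].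

Definition supnorm (g : 'rV[R]_d -> R) : R := sup (range (fun x => `|g x|)).

End Defs.

(* Main.v *)
Require Import Defs.
From HB Require Import structures.
From mathcomp Require Import all_boot all_order all_algebra.
From mathcomp Require Import all_classical all_reals all_analysis.
From mathcomp Require Import ring lra.
Import Order.TTheory GRing.Theory Num.Theory.
Local Open Scope ring_scope.
Local Open Scope classical_set_scope.

Theorem lemma3p6 (R : realType) (d : nat) (g : 'rV[R]_d -> R) (u : 'rV[R]_d) :
  (forall x, 0 <= g x) ->
  (exists M : R, forall x, g x <= M) ->
  1 <= supnorm g ->
  0 < enorm u -> enorm u < 1 ->
  (forall x, g x <= ell u x) ->
  polar g u >= polar g 0 / expR 1.
Proof.
move=> g0 [M gM] s1 u0 u1 gl.
have d0 x : dotp 0 x = 0.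
  by rewrite /dotp big1 // => i _; rewrite mxE mul0r.
set P0 := polar g 0.
have lb0 : has_lbound [set r | exists x, 0 < g x /\ r = expR (- dotp 0 x) / g x].
  exists 0 => r [x [gx ->]]; rewrite divr_ge0 // ?expR_ge0 // ltW.
have P0le x : 0 < g x -> P0 <= (g x)^-1.
  move=> gx; have := ge_inf lb0; apply.
  by exists x; split => //; rewrite d0 oppr0 expR0 div1r.
have P01 : P0 <= 1.
  rewrite leNgt; apply/negP => P1.
  have hb : forall x, `|g x| <= P0^-1.
    move=> x; rewrite ger0_norm //.
    have [gx|] := ltP 0 (g x).
      by rewrite -(invrK (g x)) lef_pV2 ?posrE ?invr_gt0 // ?P0le // (lt_trans _ P1).
    by move=> gx; apply: (le_trans gx); rewrite invr_ge0 ltW // (lt_trans _ P1).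
  have : supnorm g <= P0^-1.
    apply: ge_sup; first by exists `|g 0|, 0.
    by move=> r [x _ <-].
  move=> H; have := le_trans s1 H.
  by rewrite invf_ge1 ?(lt_trans _ P1) // leNgt P1.
have [x0 gx0] : exists x, 0 < g x.
  apply/not_existsP => H.
  have : supnorm g <= 0.
    apply: ge_sup; first by exists `|g 0|, 0.
    move=> r [x _ <-]; rewrite ger0_norm //.
    by rewrite leNgt; apply/negP => hx; apply: (H x).
  by move=> H2; have := le_trans s1 H2; rewrite ler10.
have ss0 : 0 <= dotp u u.
  by rewrite /dotp; apply: sumr_ge0 => i _; rewrite -expr2 sqr_ge0.
have en2 : enorm u ^+ 2 = dotp u u by rewrite /enorm sqr_sqrtr.
have s1' : dotp u u < 1.
  by rewrite -en2 -(expr1n R 2); rewrite ltrXn2r // ltW.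
have hb2 : hbar u ^+ 2 = 1 - dotp u u.
  by rewrite /hbar (ltW u1) sqr_sqrtr en2 // subr_ge0 ltW.
have hb0 : 0 <= hbar u by rewrite /hbar (ltW u1) sqrtr_ge0.
have hb1 : hbar u <= 1 by nra.
have dB x : dotp u (x - u) = dotp u x - dotp u u.
  by rewrite /dotp -sumrB; apply eq_bigr => i _; rewrite !mxE mulrBr.
rewrite /polar; apply: lb_le_inf.
  by exists (expR (- dotp u x0) / g x0), x0.
move=> r [x [gx ->]].
have e0 : 0 < expR 1 :> R by rewrite expR_gt0.
set t := dotp u x.
have [t1|t1] := leP t 1.
  apply: (@le_trans _ _ ((g x)^-1 / expR 1)).
    by rewrite ler_pM2r ?invr_gt0 // P0le.
  rewrite mulrC ler_pM2r ?invr_gt0 // -expRN.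
  by rewrite ler_expR lerN2.
apply: (@le_trans _ _ (expR (-1))).
  by rewrite expRN -[X in _ <= X]mul1r ler_pM2r ?invr_gt0.
rewrite ler_pdivlMr // -[t]/(dotp u x).
apply: (@le_trans _ _ (expR (-1) * expR (- ((hbar u ^+ 2)^-1 * dotp u (x - u))))).
  rewrite ler_pM2l ?expR_gt0 //; apply: (le_trans (gl x)); rewrite /ell.
  by rewrite -[X in _ <= X]mul1r ler_pM2r ?expR_gt0.
rewrite -expRD ler_expR dB -/t hb2.
have hp : 0 < 1 - dotp u u by lra.
set s := dotp u u.
have -> : -1 + - ((1 - s)^-1 * (t - s)) = - ((1 - s)^-1 * (1 - s + t - s)).
  by field; rewrite gt_eqF.
rewrite lerN2 ler_pdivlMl //.
have : 0 <= s * (t - 1) by rewrite mulr_ge0 // subr_ge0 ltW.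
rewrite /s in hp *; lra.
Qed.
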